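(* Let $\Gamma$ be a strongly regular Neumaier graph with parameters $(n,k,\lambda,\mu;a,c)$. Then $\Gamma$ has exactly three distinct eigenvalues, namely $k$, $c-a-1$, and $-\frac{\mu}{a}$. Moreover, $-\frac{\mu}{a}$ is an integer.
   Context: All graphs are finite, simple, undirected and connected; eigenvalues are those of the adjacency matrix. A graph is edge-regular with parameters $(n,k,\lambda)$ if it has $n$ vertices, is $k$-regular, and any two adjacent vertices have exactly $\lambda$ common neighbours. A clique $C$ is a regular clique with nexus $a$ if every vertex not in $C$ has exactly $a$ neighbours in $C$. A Neumaier graph is a non-complete edge-regular graph containing a regular clique; it has parameters $(n,k,\lambda;a,c)$ if it is edge-regular with parameters $(n,k,\lambda)$ and contains a regular clique of size $c$ with nexus $a$. A strongly regular graph with parameters $(n,k,\lambda,\mu)$ is a non-complete connected $k$-regular graph on $n$ vertices in which adjacent vertices have $\lambda$ common neighbours and non-adjacent vertices have $\mu$ common neighbours. A strongly regular Neumaier graph with parameters $(n,k,\lambda,\mu;a,c)$ is a strongly regular graph with parameters $(n,k,\lambda,\mu)$ which is a Neumaier graph with parameters $(n,k,\lambda;a,c)$. *)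

(* Defs.v *)
From HB Require Import structures.
From mathcomp Require Import all_boot all_order all_algebra all_field.
Set Implicit Arguments. Unset Strict Implicit. Unset Printing Implicit Defensive.
Import Order.TTheory GRing.Theory Num.Theory.

Definition simple_graph (n : nat) (e : rel 'I_n) : Prop :=
  symmetric e /\ irreflexive e.

Definition connected_graph (n : nat) (e : rel 'I_n) : Prop :=
  forall x y : 'I_n, connect e x y.

Definition non_complete (n : nat) (e : rel 'I_n) : Prop :=
  exists x y : 'I_n, x != y /\ ~~ e x y.

Definition k_regular (n : nat) (e : rel 'I_n) (k : nat) : Prop :=
  forall x : 'I_n, #|[set y | e x y]| = k.

Definition edge_regular (n : nat) (e : rel 'I_n) (k lambda : nat) : Prop :=
  k_regular e k /\
  forall x y : 'I_n, e x y -> #|[set z | e x z && e y z]| = lambda.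

Definition is_clique (n : nat) (e : rel 'I_n) (C : {set 'I_n}) : Prop :=
  forall x y, x \in C -> y \in C -> x != y -> e x y.

Definition regular_clique (n : nat) (e : rel 'I_n) (C : {set 'I_n}) (a : nat)
  : Prop :=
  is_clique e C /\ C != set0 /\
  forall x, x \notin C -> #|[set y in C | e x y]| = a.

Definition neumaier_graph (n : nat) (e : rel 'I_n) (k lambda a c : nat) : Prop :=
  edge_regular e k lambda /\ non_complete e /\
  exists C : {set 'I_n}, regular_clique e C a /\ #|C| = c.

Definition strongly_regular (n : nat) (e : rel 'I_n) (k lambda mu : nat) : Prop :=
  non_complete e /\ connected_graph e /\ edge_regular e k lambda /\
  forall x y : 'I_n, x != y -> ~~ e x y -> #|[set z | e x z && e y z]| = mu.

Definition sr_neumaier_graph (n : nat) (e : rel 'I_n) (k lambda mu a c : nat)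
  : Prop :=
  strongly_regular e k lambda mu /\ neumaier_graph e k lambda a c.

Definition adjacency (n : nat) (e : rel 'I_n) : 'M[algC]_n :=
  \matrix_(i, j) ((e i j)%:R)%R.

(* Main.v *)
Require Import Defs.
From HB Require Import structures.
From mathcomp Require Import all_boot all_order all_algebra all_field.
From mathcomp Require Import ring zify.
Import Order.TTheory GRing.Theory Num.Theory.
Set Implicit Arguments. Unset Strict Implicit. Unset Printing Implicit Defensive.
Lemma card_sum (n : nat) (P : pred 'I_n) : #|[set z | P z]| = (\sum_z (P z : nat))%N.
Proof.
rewrite -sum1_card big_mkcond; apply: eq_bigr => z _; rewrite inE; by case: (P z).
Qed.

Lemma dc (n:nat) (e : rel 'I_n) (se: symmetric e) (C : {set 'I_n}) x :
 (\sum_(y in C) #|[set z | e x z && e y z]| = \sum_(z in [set z | e x z]) #|[set y in C | e z y]|)%N.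
Proof.
transitivity (\sum_(y in C) \sum_(z in [set z | e x z]) (e z y : nat))%N.
  apply: eq_bigr => y _; rewrite card_sum [RHS]big_mkcond; apply: eq_bigr => z _.
  by rewrite inE (se y z); case: (e x z); case: (e z y).
rewrite exchange_big /=; apply: eq_bigr => z _; rewrite card_sum [LHS]big_mkcond.
apply: eq_bigr => y _; by case: (y \in C); case: (e z y).
Qed.

Lemma E1 (n:nat) (e : rel 'I_n) (se: symmetric e) (ir : irreflexive e) k lambda
  (C : {set 'I_n}) a x :
  edge_regular e k lambda -> is_clique e C ->
  (forall x, x \notin C -> #|[set y in C | e x y]| = a) -> x \in C ->
  (#|C| - 1 <= k /\ k + (#|C| - 1)*lambda = (#|C| - 1)*(#|C| - 1) + (k - (#|C| - 1))*a)%N.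
Proof.
move=> [kr er] cl nx xC.
have hN : [set z | e x z] :&: C = C :\ x.
  apply/setP=> y; rewrite !inE; case: (eqVneq y x) => [->|yx]; first by rewrite ir.
  by case yC: (y \in C) => //=; rewrite ?andbF ?andbT // (cl x y) // eq_sym.
have cC1 : #|C :\ x| = (#|C| - 1)%N by rewrite (cardsD1 x C) xC add1n subn1.
have hk : (#|C| - 1 <= k)%N by rewrite -cC1 -hN -(kr x); apply: subset_leq_card; apply: subsetIl.
split=> //.
have := dc se C x.
have -> : (\sum_(y in C) #|[set z | e x z && e y z]| = k + (#|C| - 1)*lambda)%N.
  rewrite (big_setD1 x xC) /=.
  have -> : #|[set z | e x z && e x z]| = k by rewrite -(kr x); apply: eq_card => z; rewrite !inE andbb.
  rewrite (eq_bigr (fun _ => lambda)); last first.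
    move=> y /setD1P [yx yC]; apply: er; apply: (cl x y xC yC); by rewrite eq_sym.
  by rewrite sum_nat_const cC1.
rewrite (big_setID C) /= hN.
rewrite (eq_bigr (fun _ => (#|C| - 1)%N)); last first.
  move=> z /setD1P [zx zC].
  have -> : [set y in C | e z y] = C :\ z.
    apply/setP=> y; rewrite !inE; case: (eqVneq y z) => [->|yz]; first by rewrite ir andbF.
    case yC: (y \in C) => //=; apply: (cl z y zC yC); by rewrite eq_sym.
  by rewrite (cardsD1 z C) zC add1n subn1.
rewrite sum_nat_const cC1 (eq_bigr (fun _ => a)); last by move=> z /setDP [_ zC]; apply: nx.
rewrite sum_nat_const.
have : (#|[set z | e x z] :&: C| + #|[set z | e x z] :\: C| = k)%N by rewrite cardsID kr.
rewrite hN cC1 => <-.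
by rewrite addKn.
Qed.

Lemma cl_nb (n:nat) (e : rel 'I_n) (ir : irreflexive e) (C : {set 'I_n}) z :
  is_clique e C -> z \in C -> [set y in C | e z y] = C :\ z.
Proof.
move=> cl zC; apply/setP=> y; rewrite !inE; case: (eqVneq y z) => [->|yz]; first by rewrite ir andbF.
case yC: (y \in C) => //=; apply: (cl z y zC yC); by rewrite eq_sym.
Qed.

Lemma E2 (n:nat) (e : rel 'I_n) (se: symmetric e) (ir : irreflexive e) k lambda mu
  (C : {set 'I_n}) a x :
  edge_regular e k lambda ->
  (forall x y : 'I_n, x != y -> ~~ e x y -> #|[set z | e x z && e y z]| = mu) ->
  is_clique e C ->
  (forall x, x \notin C -> #|[set y in C | e x y]| = a) -> x \notin C ->
  (a <= #|C| /\ a <= k /\ a*lambda + (#|C| - a)*mu = a*(#|C| - 1) + (k - a)*a)%N.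
Proof.
move=> [kr er] emu cl nx xC.
have hN : C :&: [set z | e x z] = [set y in C | e x y].
  by apply/setP=> y; rewrite !inE.
have ha : #|C :&: [set z | e x z]| = a by rewrite hN nx.
have haC : (a <= #|C|)%N by rewrite -ha; apply: subset_leq_card; apply: subsetIl.
have hak : (a <= k)%N by rewrite -ha -(kr x); apply: subset_leq_card; apply: subsetIr.
do 2 split => //.
have := dc se C x.
rewrite [in X in X = _ -> _](big_setID [set z | e x z]) /=.
rewrite (eq_bigr (fun _ => lambda)); last by move=> y /setIP [_]; rewrite inE => /er.
rewrite [\sum_(i in C :\: _) _](eq_bigr (fun _ => mu)); last first.
  move=> y; rewrite !inE => /andP [nxy yC]; apply: emu => //.
  by apply/eqP => exy; move: xC; rewrite exy yC.
rewrite !sum_nat_const ha.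
have -> : #|C :\: [set z | e x z]| = (#|C| - a)%N by rewrite -ha -(cardsID [set z | e x z] C) addKn.
rewrite (big_setID C) /=.
rewrite (eq_bigr (fun _ => (#|C| - 1)%N)); last first.
  move=> z /setIP [_ zC]; by rewrite (cl_nb ir cl zC) (cardsD1 z C) zC add1n subn1.
rewrite [\sum_(i in _ :\: C) _](eq_bigr (fun _ => a)); last by move=> z; rewrite !inE => /andP [zC _]; apply: nx.
rewrite !sum_nat_const setIC ha.
have -> : #|[set z | e x z] :\: C| = (k - a)%N by rewrite -ha setIC -(kr x) -(cardsID C [set z | e x z]) addKn.
by [].
Qed.

Lemma cross (n : nat) (e : rel 'I_n) (C : {set 'I_n}) p u :
  path e u p -> u \in C -> last u p \notin C ->
  exists x y, [/\ x \in C, y \notin C & e x y].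
Proof.
elim: p u => [|z p IH] u /=; first by move=> _ ->.
move=> /andP [euz pz] uC lz; case zC: (z \in C); first exact: (IH z pz zC lz).
by exists u, z; rewrite zC.
Qed.

Local Open Scope ring_scope.
Lemma alg1 (K L M A C : algC) : K + (C-1)*L = (C-1)*(C-1) + (K-(C-1))*A ->
  A*L + (C-A)*M = A*(C-1) + (K-A)*A -> C - A != 0 -> (C-1)*M = A*K.
Proof.
move=> h1 h2 hCA.
have : (C-A)*((C-1)*M - A*K) = (C-1)*((A*L + (C-A)*M) - (A*(C-1) + (K-A)*A))
   - A*((K + (C-1)*L) - ((C-1)*(C-1) + (K-(C-1))*A)) by ring.
rewrite h1 h2 !subrr !mulr0 subrr => /eqP; rewrite mulf_eq0 (negPf hCA) /= subr_eq0.
by move/eqP.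
Qed.

Lemma alg2 (K L M A C : algC) : A*L + (C-A)*M = A*(C-1) + (K-A)*A -> (C-1)*M = A*K ->
  A != 0 -> (C - A - 1) + - (M / A) = L - M /\ (C - A - 1) * - (M / A) = M - K.
Proof.
move=> h2 G hA.
have tA : - (M / A) * A = - M by rewrite mulNr divfK.
split; apply: (mulIf hA).
  rewrite mulrDl tA; apply/eqP; rewrite -subr_eq0; apply/eqP.
  have -> : (C - A - 1) * A + - M - (L - M) * A = ((C-1)*M - A*K) - ((A*L + (C-A)*M) - (A*(C-1) + (K-A)*A)) by ring.
  by rewrite G h2 !subrr.
rewrite -mulrA tA; apply/eqP; rewrite -subr_eq0; apply/eqP.
have -> : (C - A - 1) * - M - (M - K) * A = - ((C-1)*M - A*K) by ring.
by rewrite G subrr oppr0.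
Qed.

Lemma mfact n (A J : 'M[algC]_n) K L M r t : A *m A = K%:M + L *: A + M *: (J - 1%:M - A) ->
  r + t = L - M -> r * t = M - K -> (A - r%:M) *m (A - t%:M) = M *: J.
Proof.
move=> hA hs hp.
rewrite mulmxBl !mulmxBr mul_mx_scalar mul_scalar_mx -scalar_mxM hA.
have -> : L = r + t + M by rewrite hs subrK.
have -> : K = M - r * t by rewrite hp opprB addrC subrK.
apply/matrixP => i j; rewrite !mxE; case: (i == j) => /=; ring.
Qed.


Lemma adj_sq n (e : rel 'I_n) k lambda mu : symmetric e -> irreflexive e ->
  edge_regular e k lambda ->
  (forall x y : 'I_n, x != y -> ~~ e x y -> #|[set z | e x z && e y z]| = mu) ->
  adjacency e *m adjacency e = (k%:R : algC)%:M + lambda%:R *: adjacency e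
     + mu%:R *: (const_mx 1 - 1%:M - adjacency e).
Proof.
move=> se ir [kr er] emu; apply/matrixP => i j; rewrite !mxE.
have -> : \sum_z adjacency e i z * adjacency e z j = (#|[set z | e i z && e j z]|)%:R :> algC.
  rewrite card_sum natr_sum; apply: eq_bigr => z _; rewrite !mxE (se z j).
  by case: (e i z); case: (e j z); rewrite /= ?mulr1n ?mulr0n ?mul1r ?mulr0 ?mul0r.
case: (eqVneq i j) => [<-|ij].
  have -> : #|[set z | e i z && e i z]| = k by rewrite -(kr i); apply: eq_card => z; rewrite !inE andbb.
  by rewrite ir /= mulr0 addr0 mulr1n subrr subr0 mulr0 addr0.
rewrite /= mulr0n add0r subr0.
case eij: (e i j).
  by rewrite er // mulr1 subrr mulr0 addr0.
by rewrite emu ?eij // mulr0 add0r subr0 mulr1.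
Qed.

Lemma adj_J n (e : rel 'I_n) k : k_regular e k ->
  adjacency e *m (const_mx 1 : 'M[algC]_n) = k%:R *: const_mx 1.
Proof.
move=> kr; apply/matrixP => i j; rewrite !mxE mulr1 -(kr i) card_sum natr_sum.
by apply: eq_bigr => z _; rewrite !mxE mulr1.
Qed.

Lemma ones_A n (e : rel 'I_n) k : symmetric e -> k_regular e k ->
  (const_mx 1 : 'rV[algC]_n) *m adjacency e = k%:R *: const_mx 1.
Proof.
move=> se kr; apply/matrixP => i j; rewrite !mxE mulr1 -(kr j) card_sum natr_sum.
by apply: eq_bigr => z _; rewrite !mxE mul1r se.
Qed.

Lemma rowAs n (v : 'rV[algC]_n) (A : 'M_n) th s : v *m A = th *: v -> v *m (A - s%:M) = (th - s) *: v.
Proof. by move=> h; rewrite mulmxBr mul_mx_scalar h scalerBl. Qed.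

Lemma rows_eq n (M : algC) (B : 'M_n) i i' j :
  ((M *: (const_mx 1 : 'M_n)) *m B) i j = ((M *: (const_mx 1 : 'M_n)) *m B) i' j.
Proof. by rewrite !mxE; apply: eq_bigr => z _; rewrite !mxE. Qed.

Lemma not_eig n (A : 'M[algC]_n) t : ~~ eigenvalue A t -> (A - t%:M) \in unitmx.
Proof.
move=> ne; rewrite unitmxE unitfE; apply/negP => /det0P [v v0 hv].
move/negP: ne; apply; apply/eigenvalueP; exists v => //.
by move/eqP: hv; rewrite mulmxBr mul_mx_scalar subr_eq0 => /eqP.
Qed.

Lemma nat_neq (p q a : nat) : (0 < a)%N -> (0 < q)%N ->
  p%:R != - (q%:R / a%:R) :> algC.
Proof.
move=> a0 q0; apply/eqP => h.
have hA : a%:R != 0 :> algC by rewrite pnatr_eq0 -lt0n.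
have : (p * a + q)%:R == 0 :> algC.
  by rewrite natrD natrM h mulNr divfK // addNr.
by rewrite pnatr_eq0 addn_eq0 (gtn_eqF q0) andbF.
Qed.

Theorem proposition3p6 (n : nat) (e : rel 'I_n) (k lambda mu a c : nat) :
  simple_graph e -> connected_graph e ->
  sr_neumaier_graph e k lambda mu a c ->
  let theta1 : algC := k%:R in
  let theta2 : algC := c%:R - a%:R - 1 in
  let theta3 : algC := - (mu%:R / a%:R) in
  (forall x : algC, eigenvalue (adjacency e) x <-> x \in [:: theta1; theta2; theta3])
  /\ uniq [:: theta1; theta2; theta3]
  /\ (exists z : int, theta3 = z%:~R).
Proof.
move=> [se ir] conn [[nc [_ [ER emu]]] [_ [_ [C [[cl [Cn0 nx]] cC]]]]].
intros th1 th2 th3; subst th1 th2 th3.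
have [kr er] := ER.
have [x0 [y0 [nxy nexy]]] := nc.
have [z0 exz] : exists z, e x0 z.
  move: (conn x0 y0) => /connectP [[|z p] /= pth lst]; first by move: nxy; rewrite lst eqxx.
  by exists z; case/andP: pth.
have k1 : (0 < k)%N by rewrite -(kr x0); apply/card_gt0P; exists z0; rewrite inE.
have [u uC] := set0Pn _ Cn0.
have [w wC] : exists w, w \notin C.
  case x0C: (x0 \in C); last by exists x0; rewrite x0C.
  case y0C: (y0 \in C); last by exists y0; rewrite y0C.
  by move: nexy; rewrite cl.
have a1 : (0 < a)%N.
  move: (conn u w) => /connectP [p pth lst].
  have [x1 [y1 [x1C y1C e1]]] : exists x y, [/\ x \in C, y \notin C & e x y].
    by apply: (cross pth uC); rewrite -lst.
  rewrite -(nx y1 y1C); apply/card_gt0P; exists x1; by rewrite inE x1C se.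
have [aC [ak E2e]] := E2 se ir ER emu cl nx wC.
have ac : (a < #|C|)%N.
  rewrite ltn_neqAle aC andbT; apply/eqP => eac.
  have full : forall y, y \notin C -> [set y' in C | e y y'] = C.
    move=> y yC; apply/eqP; rewrite eqEcard nx // eac leqnn andbT.
    by apply/subsetP => z; rewrite inE => /andP [].
  have Nu : [set z | e u z] = [set~ u].
    apply/setP => y; rewrite !inE; case: (eqVneq y u) => [->|yu]; first by rewrite ir.
    case yC: (y \in C); first by apply: cl => //; rewrite eq_sym.
    have : u \in [set y' in C | e y y'] by rewrite full ?yC.
    by rewrite inE uC se.
  have : [set z | e x0 z] \proper [set~ x0].
    apply/properP; split.
      by apply/subsetP => z; rewrite !inE; apply: contraTneq => ->; rewrite ir.
    by exists y0; rewrite !inE // eq_sym.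
  by move/proper_card; rewrite (kr x0) cardsC1 -(kr u) Nu cardsC1 ltnn.
have [ck E1e] := E1 se ir ER cl nx uC.
rewrite cC in ac aC ck E1e E2e.
have c1 : (0 < c)%N by apply: leq_ltn_trans ac.
have h1 : (k%:R + (c%:R-1)*lambda%:R = (c%:R-1)*(c%:R-1) + (k%:R-(c%:R-1))*a%:R :> algC).
  have := congr1 (fun t => t%:R : algC) E1e; rewrite /= !natrD !natrM !natrB //.
have h2 : (a%:R*lambda%:R + (c%:R-a%:R)*mu%:R = a%:R*(c%:R-1) + (k%:R-a%:R)*a%:R :> algC).
  have := congr1 (fun t => t%:R : algC) E2e; rewrite /= !natrD !natrM !natrB // ltnW.
have hCA : c%:R - a%:R != 0 :> algC by rewrite subr_eq0 eqr_nat (gtn_eqF ac).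
have hA : a%:R != 0 :> algC by rewrite pnatr_eq0 -lt0n.
have G := alg1 h1 h2 hCA.
have [hs hp] := alg2 h2 G hA.
have hM : mu%:R != 0 :> algC.
  apply/eqP => m0; move: G; rewrite m0 mulr0 => /esym/eqP.
  by rewrite mulf_eq0 (negPf hA) /= pnatr_eq0 (gtn_eqF k1).
have mu1 : (0 < mu)%N by rewrite lt0n -(pnatr_eq0 algC).
have hr : c%:R - a%:R - 1 = (c - a - 1)%:R :> algC by rewrite !natrB // ?subn_gt0.
set A := adjacency e.
set J := const_mx 1 : 'M[algC]_n.
have hsq := adj_sq se ir ER emu.
have F1 := mfact hsq hs hp.
have F2 : (A - (- (mu%:R / a%:R))%:M) *m (A - (c%:R - a%:R - 1)%:M) = mu%:R *: J.
  by apply: (mfact hsq); [rewrite addrC | rewrite mulrC].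
split; last split.
- move=> x; rewrite !in_cons in_nil orbF; split.
  + move/eigenvalueP => [v hv v0].
    have vJ : (x - k%:R) *: (v *m J) = 0.
      rewrite scalerBl; apply/eqP; rewrite subr_eq0; apply/eqP.
      by rewrite scalemxAl -hv -mulmxA (adj_J kr) -scalemxAr.
    move: vJ => /eqP; rewrite scaler_eq0 subr_eq0 => /orP [/eqP -> | /eqP vJ0]; first by rewrite eqxx.
    have : ((x - (c%:R - a%:R - 1)) * (x - - (mu%:R / a%:R))) *: v = 0.
      rewrite -scalerA -(rowAs _ hv) scalemxAl -(rowAs _ hv) -mulmxA F1 -scalemxAr vJ0 scaler0.
      by [].
    move/eqP; rewrite scaler_eq0 (negPf v0) orbF mulf_eq0 !subr_eq0 => /orP [->|->]; by rewrite ?orbT.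
  + case/orP => [/eqP -> | /orP [/eqP -> | /eqP ->]].
    * apply/eigenvalueP; exists (const_mx 1); first exact: ones_A.
      apply/eqP => /matrixP /(_ ord0 x0); rewrite !mxE; apply/eqP; exact: oner_neq0.
    * apply: contraT => ne; have U := not_eig ne.
      have E : A - (- (mu%:R / a%:R))%:M = (mu%:R *: J) *m invmx (A - (c%:R - a%:R - 1)%:M).
        by rewrite -F2 mulmxK.
      have := rows_eq mu%:R (invmx (A - (c%:R - a%:R - 1)%:M)) x0 y0 x0.
      rewrite -E !mxE ir (se y0 x0) (negPf nexy) eq_sym (negPf nxy) eqxx /=.
      rewrite mulr1n mulr0n !sub0r oppr0 opprK => /eqP.
      by rewrite mulf_eq0 invr_eq0 (negPf hM) (negPf hA).
    * apply: contraT => ne; have U := not_eig ne.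
      have E : A - (c%:R - a%:R - 1)%:M = (mu%:R *: J) *m invmx (A - (- (mu%:R / a%:R))%:M).
        by rewrite -F1 mulmxK.
      have := rows_eq mu%:R (invmx (A - (- (mu%:R / a%:R))%:M)) x0 z0 x0.
      rewrite -E !mxE ir (se z0 x0) exz eqxx /=.
      have -> : (z0 == x0) = false by apply/negbTE; apply: contraTneq exz => ->; rewrite ir.
      rewrite mulr1n mulr0n sub0r subr0 hr => /eqP.
      rewrite eq_sym -addr_eq0 nat1r pnatr_eq0.
      by [].
- rewrite /= !in_cons in_nil !orbF andbT negb_or -andbA; apply/and3P; split.
  + rewrite hr eqr_nat; apply/eqP => kc; move: ck; rewrite kc; lia.
  + exact: nat_neq.
  + rewrite hr; exact: nat_neq.
- exists (lambda%:Z - mu%:Z - (c - a - 1)%:Z).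
  rewrite !rmorphB /=.
  have -> : - (mu%:R / a%:R) = lambda%:R - mu%:R - (c%:R - a%:R - 1) :> algC.
    by rewrite -hs addrC addKr.
  by rewrite hr.
Qed.
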